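(* Assume the Standing Setting below. Let $n\in\mathbb Z$ and let $\zeta_1,\dots,\zeta_{m_n}$ be a finite frame for $\mathcal A_n$ with $\sum_{j=1}^{m_n}\phi(\zeta_j)\delta(\zeta_j^* )=0$. Then the associated Grassmann connection satisfies, for all $x\in\mathcal A_n$ and $\xi\in H_0$, $$\sum_{j=1}^{m_n}\phi(\zeta_j)\,\delta_0(\zeta_j^*x)\,\xi=\mu^{-n}\delta(x)\xi .$$
   Context: Standing Setting: $A$ is a unital $C^*$-algebra with a strongly continuous action $\sigma$ of $S^1$; $A_n:=\{a:\sigma_\lambda(a)=\lambda^na\ \forall\lambda\}$, $P_0(a):=\frac1{2\pi}\int_0^{2\pi}\sigma_{e^{it}}(a)dt$. $\mathcal A\subseteq A$ is a norm-dense unital $*$-subalgebra with $P_0(\mathcal A)\subseteq\mathcal A$, generated as a $*$-algebra by $\mathcal A\cap A_1$; $\mathcal A_n:=\mathcal A\cap A_n$. $H_0$ is a separable Hilbert space, $\rho:A_0\to\mathcal B(H_0)$ an injective unital $*$-homomorphism, $D_0$ a selfadjoint operator on $H_0$ such that for every $a\in\mathcal A_0$, $\rho(a)$ preserves $\operatorname{Dom}(D_0)$ and $[D_0,\rho(a)]$ extends to a bounded operator $\delta_0(a)$. $H$ is a separable Hilbert space containing $H_0$ as a closed subspace, $\phi:A\to\mathcal B(H)$ a unital $*$-homomorphism and $\delta:\mathcal A\to\mathcal B(H)$ linear with (1) $\delta(a)\xi=\delta_0(a)\xi$, $\phi(a)\xi=\rho(a)\xi$ for $a\in\mathcal A_0,\xi\in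 H_0$; (2) some $\mu>0$ with $\delta(ab)=\delta(a)\phi(b)+\mu^n\phi(a)\delta(b)$ for $a\in\mathcal A_n$, $b\in\mathcal A$; (3) $\zeta^R_1,\dots,\zeta^R_k,\zeta^L_1,\dots,\zeta^L_m\in\mathcal A_1$ with $\sum_j\zeta_j^R(\zeta_j^R)^*=1=\sum_j(\zeta_j^L)^*\zeta_j^L$ and $\sum_j\phi(\zeta^R_j)\delta((\zeta^R_j)^* )=0=\sum_j\phi(\zeta_j^L)^*\delta(\zeta_j^L)$. A finite frame for $\mathcal A_n$: $\zeta_1,\dots,\zeta_p\in\mathcal A_n$ with $\sum_j\zeta_j\zeta_j^*x=x$ for $x\in\mathcal A_n$. The Grassmann connection of the frame is $\nabla_{\mathrm{Gr}}(x)=\sum_j\zeta_j\otimes\delta_0(\zeta_j^*x)$; identifying $A_n\widehat\otimes_\rho H_0$ with a subspace of $H$ via $x\otimes\xi\mapsto\phi(x)\xi$, its evaluation at $\xi\in H_0$ is the vector $\sum_j\phi(\zeta_j)\delta_0(\zeta_j^*x)\xi$ displayed in the claim. *)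

(* Defs.v *)
From mathcomp Require Import all_boot all_order all_algebra.
Set Implicit Arguments. Unset Strict Implicit. Unset Printing Implicit Defensive.
Import Order.TTheory GRing.Theory Num.Theory.
Local Open Scope ring_scope.

Section Defs.
Variable K : numClosedFieldType.   (* the complex scalars *)

Definition star_algebra (A : algType K) (st : A -> A) : Prop :=
  [/\ forall a, st (st a) = a,
      forall a b, st (a + b) = st a + st b,
      forall (c : K) a, st (c *: a) = c^* *: st a,
      forall a b, st (a * b) = st b * st a
    & st 1 = 1].

Definition circle_action (A : algType K) (st : A -> A) (sigma : K -> A -> A) : Prop :=
  [/\ forall l, `|l| = 1 ->
        [/\ forall a b, sigma l (a + b) = sigma l a + sigma l b,
            forall (c : K) a, sigma l (c *: a) = c *: sigma l a,
            forall a b, sigma l (a * b) = sigma l a * sigma l b,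
            forall a, sigma l (st a) = st (sigma l a)
          & sigma l 1 = 1],
      forall l m, `|l| = 1 -> `|m| = 1 -> forall a, sigma (l * m) a = sigma l (sigma m a)
    & forall a, sigma 1 a = a].

Definition in_deg (A : algType K) (sigma : K -> A -> A) (n : int) (a : A) : Prop :=
  forall l : K, `|l| = 1 -> sigma l a = l ^ n *: a.

Definition star_subalgebra (A : algType K) (st : A -> A) (S : A -> Prop) : Prop :=
  [/\ S 1,
      forall a b, S a -> S b -> S (a + b),
      forall (c : K) a, S a -> S (c *: a),
      forall a b, S a -> S b -> S (a * b)
    & forall a, S a -> S (st a)].

Inductive star_gen (A : algType K) (st : A -> A) (S : A -> Prop) : A -> Prop :=
| sg_base a : S a -> star_gen st S a
| sg_one : star_gen st S 1
| sg_add a b : star_gen st S a -> star_gen st S b -> star_gen st S (a + b)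
| sg_scale (c : K) a : star_gen st S a -> star_gen st S (c *: a)
| sg_mul a b : star_gen st S a -> star_gen st S b -> star_gen st S (a * b)
| sg_star a : star_gen st S a -> star_gen st S (st a).

(* inner product (linear in the first variable) *)
Definition inner_product (H : lmodType K) (ip : H -> H -> K) : Prop :=
  [/\ forall (c : K) x y z, ip (c *: x + y) z = c * ip x z + ip y z,
      forall x y, ip y x = (ip x y)^*,
      forall x, 0 <= ip x x
    & forall x, ip x x = 0 -> x = 0].

Definition subspace (H : lmodType K) (S : H -> Prop) : Prop :=
  S 0 /\ forall (c : K) x y, S x -> S y -> S (c *: x + y).

Definition lin_op (H : lmodType K) (f : H -> H) : Prop :=
  forall (c : K) x y, f (c *: x + y) = c *: f x + f y.

Definition lin_op_on (H : lmodType K) (S : H -> Prop) (f : H -> H) : Prop :=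
  (forall x, S x -> S (f x)) /\
  forall (c : K) x y, S x -> S y -> f (c *: x + y) = c *: f x + f y.

Definition star_rep (A : algType K) (st : A -> A) (H : lmodType K)
  (ip : H -> H -> K) (phi : A -> H -> H) : Prop :=
  [/\ forall a, lin_op (phi a),
      forall x, phi 1 x = x,
      forall a b x, phi (a * b) x = phi a (phi b x),
      forall (c : K) a b x, phi (c *: a + b) x = c *: phi a x + phi b x
    & forall a x y, ip (phi a x) y = ip x (phi (st a) y)].

Record standing_setting (A : algType K) (st : A -> A) (sigma : K -> A -> A)
  (cA : A -> Prop) (H : lmodType K) (ip : H -> H -> K) (H0 : H -> Prop)
  (rho : A -> H -> H) (Dom : H -> Prop) (D0 : H -> H) (delta0 : A -> H -> H)
  (phi : A -> H -> H) (delta : A -> H -> H) (mu : K)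
  (kR mL : nat) (zR : 'I_kR -> A) (zL : 'I_mL -> A) : Prop := {
  ss_star : star_algebra st;
  ss_action : circle_action st sigma;
  ss_subalg : star_subalgebra st cA;
  ss_generated : forall a, cA a <-> star_gen st (fun b => cA b /\ in_deg sigma 1 b) a;
  ss_ip : inner_product ip;
  ss_H0 : subspace H0;
  ss_rho_lin : forall a, in_deg sigma 0 a -> lin_op_on H0 (rho a);
  ss_rho_one : forall x, H0 x -> rho 1 x = x;
  ss_rho_add : forall (c : K) a b x, in_deg sigma 0 a -> in_deg sigma 0 b -> H0 x ->
      rho (c *: a + b) x = c *: rho a x + rho b x;
  ss_rho_mul : forall a b x, in_deg sigma 0 a -> in_deg sigma 0 b -> H0 x ->
      rho (a * b) x = rho a (rho b x);
  ss_rho_star : forall a x y, in_deg sigma 0 a -> H0 x -> H0 y ->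
      ip (rho a x) y = ip x (rho (st a) y);
  ss_rho_inj : forall a b, in_deg sigma 0 a -> in_deg sigma 0 b ->
      (forall x, H0 x -> rho a x = rho b x) -> a = b;
  ss_Dom : subspace Dom /\ (forall x, Dom x -> H0 x);
  ss_D0_lin : forall (c : K) x y, Dom x -> Dom y ->
      D0 (c *: x + y) = c *: D0 x + D0 y;
  ss_D0_H0 : forall x, Dom x -> H0 (D0 x);
  ss_D0_sym : forall x y, Dom x -> Dom y -> ip (D0 x) y = ip x (D0 y);
  ss_D0_sa : forall y z, H0 y -> H0 z -> (forall x, Dom x -> ip (D0 x) y = ip x z) ->
      Dom y /\ D0 y = z;
  (* delta0(a) : bounded extension of [D0, rho(a)], a in cA_0 *)
  ss_rho_Dom : forall a x, cA a -> in_deg sigma 0 a -> Dom x -> Dom (rho a x);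
  ss_delta0_lin : forall a, cA a -> in_deg sigma 0 a -> lin_op_on H0 (delta0 a);
  ss_delta0_comm : forall a x, cA a -> in_deg sigma 0 a -> Dom x ->
      delta0 a x = D0 (rho a x) - rho a (D0 x);
  ss_phi : star_rep st ip phi;
  ss_delta_op : forall a, cA a -> lin_op (delta a);
  ss_delta_lin : forall (c : K) a b x, cA a -> cA b ->
      delta (c *: a + b) x = c *: delta a x + delta b x;
  ss_1_delta : forall a x, cA a -> in_deg sigma 0 a -> H0 x -> delta a x = delta0 a x;
  ss_1_phi : forall a x, cA a -> in_deg sigma 0 a -> H0 x -> phi a x = rho a x;
  ss_mu : 0 < mu;
  ss_leibniz : forall (n : int) a b x, cA a -> in_deg sigma n a -> cA b ->
      delta (a * b) x = delta a (phi b x) + mu ^ n *: phi a (delta b x);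
  ss_zR : forall j, cA (zR j) /\ in_deg sigma 1 (zR j);
  ss_zL : forall j, cA (zL j) /\ in_deg sigma 1 (zL j);
  ss_zR_sum : \sum_j zR j * st (zR j) = 1;
  ss_zL_sum : \sum_j st (zL j) * zL j = 1;
  ss_zR_delta : forall x, \sum_j phi (zR j) (delta (st (zR j)) x) = 0;
  ss_zL_delta : forall x, \sum_j phi (st (zL j)) (delta (zL j) x) = 0
}.

End Defs.

(* Main.v *)
Require Import Defs.
From mathcomp Require Import all_boot all_order all_algebra.
Import Order.TTheory GRing.Theory Num.Theory.
Local Open Scope ring_scope.

Lemma unit_conj (K : numClosedFieldType) (c : K) : `|c| = 1 -> c^* = c^-1.
Proof.
move=> h; have c0 : c != 0 by rewrite -normr_eq0 h oner_eq0.
by rewrite invC_norm h expr1n invr1 mul1r.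
Qed.

Lemma unit_expz (K : numClosedFieldType) (c : K) (n : int) : `|c| = 1 -> `|c ^ n| = 1.
Proof.
move=> h; case: n => k; first by rewrite /= normrX h expr1n.
by rewrite NegzE -invr_expz normfV normrX h expr1n invr1.
Qed.

Lemma build (K : numClosedFieldType) (A : algType K) (st : A -> A)
  (sigma : K -> A -> A) (cA : A -> Prop) (p : nat) (z : 'I_p -> A) (c : K -> K) :
  star_algebra st -> circle_action st sigma -> star_subalgebra st cA ->
  (forall j, cA (z j) /\ forall l, `|l| = 1 -> sigma l (z j) = c l *: z j) ->
  \sum_j z j * st (z j) = 1 ->
  forall k : nat, exists s : seq A,
    (forall w, w \in s -> cA w /\ forall l, `|l| = 1 -> sigma l w = c l ^+ k *: w) /\
    \sum_(w <- s) w * st w = 1.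
Proof.
move=> [stK stD stZ stM st1] [act _ _] [c1 cD cZ cM cS] hz hs.
elim=> [|k [s [hs1 hs2]]].
  exists [:: 1]; split; last by rewrite big_seq1 st1 mulr1.
  move=> w; rewrite inE => /eqP ->; split=> // l hl.
  by have [_ _ _ _ ->] := act l hl; rewrite expr0 scale1r.
exists [seq w * z j | w <- s, j <- enum 'I_p]; split.
  move=> w /allpairsP [[u j] /= [hu _ ->]].
  have [cu su] := hs1 u hu; have [cz sz] := hz j.
  split; first exact: cM.
  move=> l hl; have [_ _ -> _ _] := act l hl.
  by rewrite su // sz // -scalerAl -scalerAr scalerA exprSr.
rewrite big_allpairs_dep -[RHS]hs2; apply: eq_bigr => u _.
rewrite (eq_bigr (fun j => u * (z j * st (z j)) * st u)); last first.
  by move=> j _; rewrite stM !mulrA.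
have E : \sum_(i <- enum (ordinal p)) z i * st (z i) = 1 by rewrite big_enum -hs; apply: eq_bigl.
by rewrite -big_distrl -big_distrr /= E mulr1.
Qed.

Lemma lin_opD (K : numClosedFieldType) (H : lmodType K) (f : H -> H) :
  lin_op f -> forall x y, f (x + y) = f x + f y.
Proof. by move=> h x y; have := h 1 x y; rewrite !scale1r. Qed.
Arguments lin_opD {K H f}.

Lemma lin_op0 (K : numClosedFieldType) (H : lmodType K) (f : H -> H) :
  lin_op f -> f 0 = 0.
Proof.
move=> h; have e := lin_opD h 0 0; rewrite addr0 in e.
by have := congr1 (fun t => t - f 0) e; rewrite subrr addrK.
Qed.
Arguments lin_op0 {K H f}.

Lemma lin_opZ (K : numClosedFieldType) (H : lmodType K) (f : H -> H) :
  lin_op f -> forall c x, f (c *: x) = c *: f x.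
Proof. by move=> h c x; have := h c x 0; rewrite (lin_op0 h) !addr0. Qed.
Arguments lin_opZ {K H f}.

Lemma lin_op_sum (K : numClosedFieldType) (H : lmodType K) (f : H -> H) (I : Type) (r : seq I) (F : I -> H) :
  lin_op f -> f (\sum_(i <- r) F i) = \sum_(i <- r) f (F i).
Proof.
move=> h; elim: r => [|a r IH]; first by rewrite !big_nil lin_op0.
by rewrite !big_cons lin_opD // IH.
Qed.

Lemma phi_sum (K : numClosedFieldType) (A : algType K) (st : A -> A) (H : lmodType K)
  (ip : H -> H -> K) (phi : A -> H -> H) (I : Type) (r : seq I) (F : I -> A) x :
  star_rep st ip phi -> phi (\sum_(i <- r) F i) x = \sum_(i <- r) phi (F i) x.
Proof.
move=> [_ _ _ hl _].
have hD a b : phi (a + b) x = phi a x + phi b x by have := hl 1 a b x; rewrite !scale1r.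
have h0 : phi 0 x = 0.
  have e := hD 0 0; rewrite addr0 in e.
  by have := congr1 (fun t => t - phi 0 x) e; rewrite subrr addrK.
elim: r => [|a r IH]; first by rewrite !big_nil.
by rewrite !big_cons hD IH.
Qed.

Theorem proposition7p7 (K : numClosedFieldType) (A : algType K) (st : A -> A)
  (sigma : K -> A -> A) (cA : A -> Prop) (H : lmodType K) (ip : H -> H -> K)
  (H0 : H -> Prop) (rho : A -> H -> H) (Dom : H -> Prop) (D0 : H -> H)
  (delta0 : A -> H -> H) (phi : A -> H -> H) (delta : A -> H -> H) (mu : K)
  (kR mL : nat) (zR : 'I_kR -> A) (zL : 'I_mL -> A)
  (n : int) (m : nat) (zeta : 'I_m -> A) :
  standing_setting st sigma cA ip H0 rho Dom D0 delta0 phi delta mu zR zL ->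
  (* finite frame for cA_n *)
  (forall j, cA (zeta j) /\ in_deg sigma n (zeta j)) ->
  (forall x, cA x -> in_deg sigma n x -> \sum_j zeta j * st (zeta j) * x = x) ->
  (forall xi, \sum_j phi (zeta j) (delta (st (zeta j)) xi) = 0) ->
  forall x xi, cA x -> in_deg sigma n x -> H0 xi ->
    \sum_j phi (zeta j) (delta0 (st (zeta j) * x) xi) = mu ^ (- n) *: delta x xi.
Proof.
move=> S hz hfr hsum x xi cx dx hxi.
have hst := ss_star S; have hact := ss_action S; have hsub := ss_subalg S.
have [stK stD stZ stM st1] := hst.
have [act _ _] := hact.
have [c1 cD cZ cM cS] := hsub.
have hphi := ss_phi S.
have [phil phi1 phiM _ _] := hphi.
have [s [hs1 hs2]] : exists s : seq A,
    (forall w, w \in s -> cA w /\ in_deg sigma n w) /\ \sum_(w <- s) w * st w = 1.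
  case: n hz hfr hsum dx => k _ _ _ _.
    have [j|] := @build K A st sigma cA kR zR (fun l => l) hst hact hsub _ (ss_zR_sum S) k.
      by have [cj dj] := ss_zR S j.
    move=> s [h1 h2]; exists s; split=> // w /h1 [cw dw]; by split.
  have [j| |] := @build K A st sigma cA mL (fun j => st (zL j)) (fun l => l^-1) hst hact hsub _ _ k.+1.
  - have [cj dj] := ss_zL S j; split; first exact: cS.
    move=> l hl; have [_ _ _ -> _] := act l hl.
    by rewrite dj // expr1z stZ unit_conj.
  - by rewrite -(ss_zL_sum S); apply: eq_bigr => j _; rewrite stK.
  move=> s [h1 h2]; exists s; split=> // w /h1 [cw dw]; split=> // l hl.
  by rewrite dw // exprVn.
have hP : \sum_j zeta j * st (zeta j) = 1.
  transitivity ((\sum_j zeta j * st (zeta j)) * \sum_(w <- s) w * st w).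
    by rewrite hs2 mulr1.
  rewrite -{1}hs2 big_distrr /= big_seq [RHS]big_seq.
  apply: eq_bigr => w hw; have [cw dw] := hs1 w hw.
  by rewrite mulrA mulr_suml (hfr w cw dw).
have dst j : in_deg sigma (- n) (st (zeta j)).
  move=> l hl; have [_ _ _ -> _] := act l hl.
  have [_ dj] := hz j.
  by rewrite dj // stZ unit_conj ?unit_expz // invr_expz.
have d0 j : in_deg sigma 0 (st (zeta j) * x).
  move=> l hl; have [_ _ -> _ _] := act l hl.
  rewrite dst // dx // -scalerAl -scalerAr scalerA -invr_expz mulVf ?expr0z //.
  by rewrite -normr_eq0 unit_expz ?oner_eq0.
have cst j : cA (st (zeta j)) by apply: cS; have [] := hz j.
rewrite (eq_bigr (fun j => phi (zeta j) (delta (st (zeta j)) (phi x xi)) +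
     mu ^ (- n) *: phi (zeta j * st (zeta j)) (delta x xi))); last first.
  move=> j _.
  have cx0 : cA (st (zeta j) * x) by apply: cM.
  rewrite -(ss_1_delta S cx0 (d0 j) hxi).
  rewrite (ss_leibniz S _ (cst j) (dst j) cx).
  by rewrite lin_opD // lin_opZ // phiM.
rewrite big_split /= hsum add0r -scaler_sumr.
by rewrite -(@phi_sum K A st H ip phi _ _ _ (delta x xi) hphi) hP phi1.
Qed.
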